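(* Let $H$ be a graph and $n$ a positive integer. Then $\mathrm{IR}(H, K_{1,n}) \leq |E(H)|(n-1) + |V(H)|$. Moreover, if $s$ is a positive integer and $H'$ is the blow-up of $H$ with $s$ vertices in each part, then $\mathrm{IR}(H', K_{1,n}) \leq s\big(|E(H)|(n-1)+|V(H)|\big)$.
   Context: All graphs are finite and simple. $K_{1,n}$ denotes the star with $n$ edges. The blow-up of $H$ with $s$ vertices in each part is the graph obtained by replacing each vertex $v$ of $H$ by an independent set $V_v$ of $s$ vertices (the sets pairwise disjoint) and joining $u'\in V_u$ to $v'\in V_v$ if and only if $uv\in E(H)$. For graphs $F$, $H$, $G$, write $F \overset{\text{ind}}{\longrightarrow} (H,G)$ if for every coloring of the edges of $F$ with red and blue there is either a red induced copy of $H$ (a vertex set $S\subseteq V(F)$ with $F[S]\cong H$ and all edges of $F[S]$ red) or a blue induced copy of $G$ (defined analogously with blue). The induced Ramsey number $\mathrm{IR}(H,G)$ is the smallest number of vertices of a graph $F$ with $F \overset{\text{ind}}{\longrightarrow} (H,G)$. *)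

(* Defs.v *)
From mathcomp Require Import all_boot.
Set Implicit Arguments. Unset Strict Implicit. Unset Printing Implicit Defensive.

Record sgraph := SGraph {
  vert :> finType;
  adj : rel vert;
  adj_sym : symmetric adj;
  adj_irr : irreflexive adj }.

Definition edges (G : sgraph) : {set {set G}} :=
  [set e : {set G} | [exists u : G, exists v : G, adj u v && (e == [set u; v])]].

(* Star K_{1,n}: center None, leaves Some i. *)
Definition star_adj (n : nat) : rel (option 'I_n) :=
  fun x y => match x, y with
             | None, Some _ | Some _, None => true
             | _, _ => false end.
Lemma star_sym n : symmetric (@star_adj n). Proof. by case=> [?|] [?|]. Qed.
Lemma star_irr n : irreflexive (@star_adj n). Proof. by case. Qed.
Definition star (n : nat) : sgraph := SGraph (@star_sym n) (@star_irr n).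

Definition blowup_adj (H : sgraph) (s : nat) : rel (H * 'I_s)%type :=
  fun x y => adj x.1 y.1.
Lemma blowup_sym H s : symmetric (@blowup_adj H s).
Proof. by move=> x y; rewrite /blowup_adj adj_sym. Qed.
Lemma blowup_irr H s : irreflexive (@blowup_adj H s).
Proof. by move=> x; rewrite /blowup_adj adj_irr. Qed.
Definition blowup (H : sgraph) (s : nat) : sgraph :=
  SGraph (@blowup_sym H s) (@blowup_irr H s).

Definition mono_induced_copy (F H : sgraph) (c : rel F) (b : bool) : Prop :=
  exists f : H -> F, injective f /\
    (forall u v : H, adj (f u) (f v) = adj u v) /\
    (forall u v : H, adj u v -> c (f u) (f v) = b).

(* F ->ind (H, G): every red/blue colouring of E(F) (a symmetric c : rel F,
   true = red, false = blue; values on non-edges irrelevant) has a red induced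
   H or a blue induced G. *)
Definition ind_arrows (F H G : sgraph) : Prop :=
  forall c : rel F, symmetric c ->
    mono_induced_copy H c true \/ mono_induced_copy G c false.

Definition IR_le (H G : sgraph) (N : nat) : Prop :=
  exists F : sgraph, #|F| <= N /\ ind_arrows F H G.

(* Main.v *)
Require Import Defs.
From mathcomp Require Import all_boot zify.
From Stdlib Require Import Classical.
Set Implicit Arguments. Unset Strict Implicit. Unset Printing Implicit Defensive.

Lemma card_bigcup_le (I T : finType) (P : pred I) (F : I -> {set T}) :
  #|\bigcup_(i | P i) F i| <= \sum_(i | P i) #|F i|.
Proof.
elim/big_rec2: _ => [|i n U _ le]; first by rewrite cards0.
by rewrite (leq_trans (leq_card_setU (F i) U).1) ?leq_add2l.
Qed.

Definition rk (H : sgraph) (v : H) : nat := enum_rank v.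
Lemma rk_inj (H : sgraph) : injective (@rk H).
Proof. by move=> u v /val_inj /enum_rank_inj. Qed.

Definition dn (H : sgraph) (v : H) := #|[set u : H | adj u v && (rk u < rk v)]|.

Lemma sum_dn (H : sgraph) : \sum_(v : H) dn v <= #|edges H|.
Proof.
set A := [set p : H * H | adj p.1 p.2 && (rk p.1 < rk p.2)].
have -> : \sum_(v : H) dn v = #|A|.
  have -> : #|A| = \sum_(p : H * H) (if (p.1, p.2) \in A then 1 else 0).
    by rewrite -sum1_card big_mkcond /=; apply: eq_bigr => -[].
  rewrite -(pair_big xpredT xpredT (fun i j => if (i,j) \in A then 1 else 0)) /=.
  rewrite exchange_big /=; apply: eq_bigr => v _.
  by rewrite /dn -sum1_card big_mkcond /=; apply: eq_bigr => u _; rewrite !inE.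
have inj : {in A &, injective (fun p : H * H => [set p.1; p.2])}.
  move=> [u v] [u' v']; rewrite !inE /= => /andP[_ l1] /andP[_ l2] E.
  have hu : u \in [set u'; v'] by rewrite -E set21.
  have hv : v \in [set u'; v'] by rewrite -E set22.
  move: hu hv; rewrite !inE => /orP[/eqP eu|/eqP eu] /orP[/eqP ev|/eqP ev]; subst.
  - lia.
  - by [].
  - lia.
  - lia.
rewrite -(card_in_imset inj); apply: subset_leq_card; apply/subsetP => e /imsetP[[u v]].
rewrite inE => /andP[a _] ->; rewrite inE; apply/existsP; exists u; apply/existsP; exists v.
by rewrite a eqxx.
Qed.

Definition mm (H : sgraph) (n : nat) (v : H) := ((n - 1) * dn v).+1.
Definition fam (H : sgraph) (s n : nat) (v : H) := 'I_(s * mm n v).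
Definition TT (H : sgraph) (s n : nat) := {v : H & @fam H s n v}.
Arguments TT : clear implicits.
Definition Tadj (H : sgraph) (s n : nat) : rel (TT H s n) := fun a b => adj (tag a) (tag b).
Lemma Tadj_sym H s n : symmetric (@Tadj H s n).
Proof. by move=> x y; rewrite /Tadj adj_sym. Qed.
Lemma Tadj_irr H s n : irreflexive (@Tadj H s n).
Proof. by move=> x; rewrite /Tadj adj_irr. Qed.
Definition FF (H : sgraph) (s n : nat) : sgraph := SGraph (@Tadj_sym H s n) (@Tadj_irr H s n).

Definition key (H : sgraph) (s n : nat) (a : TT H s n) : H * nat := (tag a, val (tagged a)).
Lemma key_inj H s n : injective (@key H s n).
Proof.
move=> [u x] [v y] /= [e1 e2]; subst v; congr (existT _ u _); exact: val_inj.
Qed.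

Lemma card_FF H s n : #|FF H s n| = s * (\sum_(v : H) dn v * (n - 1) + #|H|).
Proof.
rewrite /= card_tagged sumnE big_map -big_enum /=.
rewrite (eq_bigr (fun v => s * (dn v * (n-1)) + s)); last first.
  by move=> v _; rewrite card_ord /mm; lia.
rewrite big_split /= big_const_seq count_predT -cardE iter_addn_0 -big_distrr /= -big_distrl /= mulnDr mulnC.
by [].
Qed.

Lemma star_of H s n (c : rel (FF H s n)) (x : FF H s n) (v : H) (S : {set @fam H s n v}) :
  symmetric c -> adj (tag x) v -> n <= #|S| ->
  (forall j, j \in S -> c x (Tagged (@fam H s n) j) = false) ->
  mono_induced_copy (star n) c false.
Proof.
move=> csym xv nS hS.
pose f (o : star n) : FF H s n :=
  match o with None => x | Some l => Tagged (@fam H s n) (enum_val (widen_ord nS l)) end.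
exists f; split; [|split].
- move=> [l|] [l'|] //=.
  + move=> e; have := congr1 (fun a : FF H s n => val (tagged a)) e => /= /val_inj /enum_val_inj.
    by move=> /(congr1 val) /= /val_inj ->.
  + by move=> e; move: xv; rewrite -e /= adj_irr.
  + by move=> e; move: xv; rewrite e /= adj_irr.
- move=> [l|] [l'|] /=; rewrite /Tadj /= ?adj_irr //; first by rewrite adj_sym.
- move=> [l|] [l'|] //= _; rewrite ?hS ?enum_valP //.
  by rewrite csym hS ?enum_valP.
Qed.

Lemma step H s n (c : rel (FF H s n)) (r : H -> nat -> nat) (v0 : H) :
  0 < s -> symmetric c -> ~ mono_induced_copy (star n) c false ->
  (forall u, adj u v0 -> rk u < rk v0 -> forall i, i < s -> r u i < s * mm n u) ->
  exists g : nat -> nat, (forall i, i < s -> g i < s * mm n v0) /\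
    (forall i j, i < s -> j < s -> g i = g j -> i = j) /\
    (forall u i j, adj u v0 -> rk u < rk v0 -> i < s -> j < s ->
       forall a b : FF H s n, key a = (u, r u i) -> key b = (v0, g j) -> c a b).
Proof.
move=> s0 csym nb rb.
pose E := [set u : H | adj u v0 && (rk u < rk v0)].
pose Bui (u : H) (i : 'I_s) := [set j : @fam H s n v0 |
   [exists a : FF H s n, (key a == (u, r u i)) && ~~ c a (Tagged (@fam H s n) j)]].
pose B := \bigcup_(u in E) \bigcup_(i : 'I_s) Bui u i.
have cB : forall u i, u \in E -> #|Bui u i| <= n - 1.
  move=> u i; rewrite inE => /andP[uv ur].
  rewrite leqNgt; apply/negP => hn; apply: nb.
  have hr := rb u uv ur i (ltn_ord i).
  pose a0 : FF H s n := Tagged (@fam H s n) (Ordinal hr).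
  apply: (@star_of H s n c a0 v0 (Bui u i) csym uv); first by apply: leq_trans hn; clear; lia.
  move=> j; rewrite inE => /existsP[a /andP[/eqP ka hc]].
  have -> : a0 = a by apply: key_inj; rewrite ka.
  by apply/negbTE.
have cBB : #|B| <= #|E| * (s * (n - 1)).
  apply: (leq_trans (card_bigcup_le _ _)).
  rewrite -sum_nat_const; apply: leq_sum => u uE.
  apply: (leq_trans (card_bigcup_le _ _)).
  apply: (@leq_trans (\sum_(i : 'I_s) (n-1))); first by apply: leq_sum => i _; exact: cB.
  by rewrite sum_nat_const card_ord.
pose G := ~: B.
have cG : s <= #|G|.
  have h1 := cardsC B; rewrite card_ord in h1.
  have h2 : s * mm n v0 = #|E| * (s * (n - 1)) + s.
    rewrite /mm; have -> : dn v0 = #|E| by []. lia.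
  rewrite /G; move: h1 h2 cBB; generalize #|B| #|~: B| #|E| => x y z h1' h2' h3'; rewrite h2' in h1'.
  move: h1' h3'; clear; lia.
have hpos : 0 < s * mm n v0 by rewrite muln_gt0 s0.
pose x0 : @fam H s n v0 := Ordinal hpos.
pose g i := val (nth x0 (enum G) i).
have sz : size (enum G) = #|G| by rewrite -cardE.
exists g; split; [|split].
- by move=> i _; rewrite /g ltn_ord.
- move=> i j hi hj e.
  have e' : nth x0 (enum G) i == nth x0 (enum G) j by apply/eqP/val_inj.
  rewrite nth_uniq ?enum_uniq ?sz in e'; try exact: leq_trans hi cG; try exact: leq_trans hj cG.
  by apply/eqP. by [].
- move=> u i j uv ur hi hj a b ka kb.
  have jG : nth x0 (enum G) j \in G by rewrite -mem_enum mem_nth // sz; lia.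
  have -> : b = Tagged (@fam H s n) (nth x0 (enum G) j) by apply: key_inj; rewrite kb.
  move: jG; rewrite inE => /negP jB.
  apply/negPn/negP => hc; apply: jB.
  apply/bigcupP; exists u; first by rewrite inE uv ur.
  apply/bigcupP; exists (Ordinal hi) => //.
  rewrite inE; apply/existsP; exists a; by rewrite ka eqxx hc.
Qed.

Definition Inv H s n (c : rel (FF H s n)) (k : nat) (r : H -> nat -> nat) :=
  [/\ (forall v, rk v < k -> forall i, i < s -> r v i < s * mm n v),
      (forall v, rk v < k -> forall i j, i < s -> j < s -> r v i = r v j -> i = j) &
      (forall u v i j, rk u < k -> rk v < k -> adj u v -> i < s -> j < s ->
         forall a b : FF H s n, key a = (u, r u i) -> key b = (v, r v j) -> c a b)].

Lemma greedy H s n (c : rel (FF H s n)) :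
  0 < s -> symmetric c -> ~ mono_induced_copy (star n) c false ->
  forall k, exists r, Inv c k r.
Proof.
move=> s0 csym nb; elim=> [|k [r [r1 r2 r3]]].
  by exists (fun _ _ => 0); split.
case: (pickP (fun v : H => rk v == k)) => [v0 /eqP hv0|none]; last first.
  have lt : forall v : H, rk v < k.+1 -> rk v < k.
    by move=> v; rewrite ltnS leq_eqVlt none.
  exists r; split.
  - by move=> v /lt; apply: r1.
  - by move=> v /lt; apply: r2.
  - by move=> u v i j /lt hu /lt hv; apply: r3.
have rb : forall u, adj u v0 -> rk u < rk v0 -> forall i, i < s -> r u i < s * mm n u.
  by move=> u _ ur; apply: r1; rewrite -hv0.
have [g [g1 [g2 g3]]] := step s0 csym nb rb.
pose r' w := if w == v0 then g else r w.
have lt : forall v : H, rk v < k.+1 -> v != v0 -> rk v < k.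
  move=> v; rewrite ltnS leq_eqVlt => /orP[/eqP e|//] /eqP[]; apply: rk_inj; by rewrite e hv0.
exists r'; split.
- move=> v hv i hi; rewrite /r' /=; case: ifP => [/eqP ev|/negbT ne]; first by subst v; exact: g1.
  exact: r1 (lt v hv ne) i hi.
- move=> v hv i j hi hj; rewrite /r' /=; case: ifP => [/eqP _|/negbT ne]; first exact: g2.
  exact: r2 (lt v hv ne) i j hi hj.
- move=> u v i j hu hv uv hi hj a b; rewrite /r' /=.
  case: (eqVneq u v0) => [eu|neu]; case: (eqVneq v v0) => [ev|nev].
  + by subst; rewrite adj_irr in uv.
  + subst u => ka kb; rewrite csym.
    by apply: (g3 v j i _ _ hj hi b a kb ka); [rewrite adj_sym | rewrite hv0; exact: lt].
  + subst v => ka kb.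
    by apply: (g3 u i j uv _ hi hj a b ka kb); rewrite hv0; exact: lt.
  + by apply: r3 => //; exact: lt.
Qed.

Lemma gen (H : sgraph) (n s : nat) : 0 < s ->
  exists F : sgraph, #|F| <= s * (#|edges H| * (n - 1) + #|H|) /\
   forall c : rel F, symmetric c ->
    (exists f : H * 'I_s -> F, injective f /\ (forall x y, adj (f x) (f y) = adj x.1 y.1)
        /\ (forall x y, adj x.1 y.1 -> c (f x) (f y) = true))
    \/ mono_induced_copy (star n) c false.
Proof.
move=> s0; exists (FF H s n); split.
  rewrite card_FF leq_mul2l leq_add2r -big_distrl /= leq_mul2r sum_dn.
  by rewrite !orbT.
move=> c csym.
case: (classic (mono_induced_copy (star n) c false)) => [b|nb]; [by right|left].
have [r [r1 r2 r3]] := greedy s0 csym nb #|H|.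
have rkl : forall v : H, rk v < #|H| by move=> v; exact: ltn_ord.
pose f (x : H * 'I_s) : FF H s n :=
  Tagged (@fam H s n) (Ordinal (r1 x.1 (rkl x.1) x.2 (ltn_ord x.2))).
exists f; split; [|split].
- move=> [u i] [v j] e.
  have [eu ev] : u = v /\ r u i = r v j by have := congr1 (@key H s n) e; case.
  subst v.
  by rewrite (val_inj (r2 u (rkl u) i j (ltn_ord i) (ltn_ord j) ev)).
- by [].
- move=> [u i] [v j] /= uv.
  by apply: (r3 u v i j (rkl u) (rkl v) uv (ltn_ord i) (ltn_ord j)).
Qed.

Theorem lemma2 (H : sgraph) (n : nat) :
  0 < n ->
  IR_le H (star n) (#|edges H| * (n - 1) + #|H|) /\
  (forall s : nat, 0 < s ->
     IR_le (blowup H s) (star n) (s * (#|edges H| * (n - 1) + #|H|))).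
Proof.
move=> n0; split.
- have [F [hF hc]] := @gen H n 1 (ltn0Sn 0).
  exists F; split; first by rewrite mul1n in hF.
  move=> c cs; case: (hc c cs) => [[f [fi [fa fc]]]|b]; [left|by right].
  exists (fun v => f (v, ord0)); split; [|split].
  + by move=> u v /fi [].
  + by move=> u v; exact: fa.
  + by move=> u v uv; exact: fc.
- move=> s s0; have [F [hF hc]] := @gen H n s s0; exists F; split; first exact: hF.
  move=> c cs.
  case: (hc c cs) => [[f [fi [fa fc]]]|b]; [left|by right].
  by exists f; split => //; split.
Qed.
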